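(* Let $(\mathcal A;\mathcal E)$ be an exact category with exact coproducts and let $\{\mathcal J_i: i\in I\}$ be a set-indexed family of special preenveloping ideals. Then $\bigcap_{i\in I}\mathcal J_i$ is a special preenveloping ideal.
   Context: An exact category $(\mathcal A;\mathcal E)$ is an additive category with a class of conflations $X\to Y\to Z$ satisfying the Quillen–Keller axioms; it has exact coproducts if set-indexed coproducts exist and coproducts of conflations are conflations. $\mathrm{Ext}(A,B)$ is the group of conflations $B\to C\to A$. Ideals are families of subgroups of Hom closed under composition with arbitrary morphisms (the family $i\mapsto\mathcal J_i$ is assumed uniformly indexed so that the intersection is a class). For $a:A_0\to A_1$, $b:B_0\to B_1$, $\mathrm{Ext}(a,b):\mathrm{Ext}(A_1,B_0)\to\mathrm{Ext}(A_0,B_1)$ is pushout along $b$ followed by pullback along $a$; ${}^\perp\mathcal J$ is the ideal of $a$ with $\mathrm{Ext}(a,j)=0$ for all $j\in\mathcal J$. A special $\mathcal J$-preenvelope of $B$ is a morphism $j:B\to C_0$ in $\mathcal J$ for which there are conflations $B\xrightarrow{j}C_0\to A_0$, $B\to C_1\to A_1$ and a morphism of conflations between them with components $(1_B,c,a)$ where $a\in{}^\perp\mathcal J$. $\mathcal J$ is special preenveloping if every object has a special $\mathcal J$-preenvelope. *)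

(* Defs.v *)
From HB Require Import structures.
From mathcomp Require Import all_boot all_algebra.
Set Implicit Arguments. Unset Strict Implicit. Unset Printing Implicit Defensive.
Import GRing.Theory.
Local Open Scope ring_scope.

Record Cat := {
  Ob : Type;
  Hom : Ob -> Ob -> zmodType;
  comp : forall A B C : Ob, Hom B C -> Hom A B -> Hom A C;
  idm : forall A : Ob, Hom A A;
  compA : forall A B C D (h : Hom C D) (g : Hom B C) (f : Hom A B),
      comp h (comp g f) = comp (comp h g) f;
  comp1m : forall A B (f : Hom A B), comp (idm B) f = f;
  compm1 : forall A B (f : Hom A B), comp f (idm A) = f;
  compDl : forall A B C (g g' : Hom B C) (f : Hom A B),
      comp (g + g') f = comp g f + comp g' f;
  compDr : forall A B C (g : Hom B C) (f f' : Hom A B),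
      comp g (f + f') = comp g f + comp g f'
}.

Arguments comp {c A B C}.
Arguments idm {c}.

Section Defs.
Variable C : Cat.
Local Notation Ob := (Ob C).
Local Notation Hom := (@Hom C).
Local Notation "g \o f" := (comp g f).

Definition is_zero_object (Z : Ob) :=
  (forall A (f : Hom Z A), f = 0) /\ (forall A (f : Hom A Z), f = 0).

Definition is_biproduct (A B P : Ob) (i1 : Hom A P) (i2 : Hom B P)
    (p1 : Hom P A) (p2 : Hom P B) :=
  [/\ p1 \o i1 = idm A, p2 \o i2 = idm B, p1 \o i2 = 0, p2 \o i1 = 0
    & (i1 \o p1) + (i2 \o p2) = idm P].

Definition is_additive :=
  (exists Z, is_zero_object Z) /\
  (forall A B : Ob, exists P (i1 : Hom A P) (i2 : Hom B P) p1 p2,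
      is_biproduct i1 i2 p1 p2).

Definition is_iso A B (f : Hom A B) :=
  exists g : Hom B A, g \o f = idm A /\ f \o g = idm B.

Definition is_kernel X Y Z (i : Hom X Y) (d : Hom Y Z) :=
  d \o i = 0 /\
  forall T (f : Hom T Y), d \o f = 0 ->
    exists h : Hom T X, i \o h = f /\ forall h', i \o h' = f -> h' = h.

Definition is_cokernel X Y Z (i : Hom X Y) (d : Hom Y Z) :=
  d \o i = 0 /\
  forall T (f : Hom Y T), f \o i = 0 ->
    exists h : Hom Z T, h \o d = f /\ forall h', h' \o d = f -> h' = h.

Definition kc_pair X Y Z (i : Hom X Y) (d : Hom Y Z) :=
  is_kernel i d /\ is_cokernel i d.

Definition is_pushout X Y X' P (i : Hom X Y) (f : Hom X X')
    (i' : Hom X' P) (f' : Hom Y P) :=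
  f' \o i = i' \o f /\
  forall T (u : Hom Y T) (v : Hom X' T), u \o i = v \o f ->
    exists h : Hom P T, (h \o f' = u /\ h \o i' = v) /\
      forall h', h' \o f' = u -> h' \o i' = v -> h' = h.

Definition is_pullback Y Z Z' P (d : Hom Y Z) (g : Hom Z' Z)
    (d' : Hom P Z') (g' : Hom P Y) :=
  d \o g' = g \o d' /\
  forall T (u : Hom T Y) (v : Hom T Z'), d \o u = g \o v ->
    exists h : Hom T P, (g' \o h = u /\ d' \o h = v) /\
      forall h', g' \o h' = u -> d' \o h' = v -> h' = h.

(** A class of conflations: E i d means  X --i--> Y --d--> Z  is a conflation. *)
Definition ConfClass := forall X Y Z : Ob, Hom X Y -> Hom Y Z -> Prop.

Section Exact.
Variable E : ConfClass.

Definition inflation X Y (i : Hom X Y) := exists Z (d : Hom Y Z), E i d.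
Definition deflation Y Z (d : Hom Y Z) := exists X (i : Hom X Y), E i d.

(** Quillen--Keller axioms (as in Buehler, "Exact categories", Def. 2.1). *)
Definition is_exact_structure :=
  [/\ (forall X Y Z (i : Hom X Y) (d : Hom Y Z), E i d -> kc_pair i d),
      (forall X Y Z X' Y' Z' (i : Hom X Y) (d : Hom Y Z)
              (i' : Hom X' Y') (d' : Hom Y' Z')
              (f : Hom X X') (g : Hom Y Y') (h : Hom Z Z'),
          E i d -> is_iso f -> is_iso g -> is_iso h ->
          g \o i = i' \o f -> h \o d = d' \o g -> E i' d'),
      (forall A, inflation (idm A)) /\ (forall A, deflation (idm A)),
      (forall X Y W (i : Hom X Y) (j : Hom Y W),
          inflation i -> inflation j -> inflation (j \o i)) /\
      (forall X Y W (d : Hom X Y) (e : Hom Y W),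
          deflation d -> deflation e -> deflation (e \o d))
    &
      (forall X Y X' (i : Hom X Y) (f : Hom X X'), inflation i ->
          exists P (i' : Hom X' P) (f' : Hom Y P),
            is_pushout i f i' f' /\ inflation i') /\
      (forall Y Z Z' (d : Hom Y Z) (g : Hom Z' Z), deflation d ->
          exists P (d' : Hom P Z') (g' : Hom P Y),
            is_pullback d g d' g' /\ deflation d')].

Definition is_coproduct (K : Type) (F : K -> Ob) (P : Ob)
    (iota : forall k, Hom (F k) P) :=
  forall T (f : forall k, Hom (F k) T),
    exists h : Hom P T, (forall k, h \o iota k = f k) /\
      forall h', (forall k, h' \o iota k = f k) -> h' = h.

Definition has_coproducts :=
  forall (K : Type) (F : K -> Ob), exists P (iota : forall k, Hom (F k) P),
    is_coproduct iota.

Definition coproducts_exact :=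
  forall (K : Type) (X Y Z : K -> Ob)
         (i : forall k, Hom (X k) (Y k)) (d : forall k, Hom (Y k) (Z k)),
    (forall k, E (i k) (d k)) ->
    forall PX PY PZ (iX : forall k, Hom (X k) PX) (iY : forall k, Hom (Y k) PY)
           (iZ : forall k, Hom (Z k) PZ),
      is_coproduct iX -> is_coproduct iY -> is_coproduct iZ ->
      forall (I : Hom PX PY) (D : Hom PY PZ),
        (forall k, I \o iX k = iY k \o i k) ->
        (forall k, D \o iY k = iZ k \o d k) ->
        E I D.

Definition has_exact_coproducts := has_coproducts /\ coproducts_exact.

Definition split_conf B Y A (f : Hom B Y) (g : Hom Y A) :=
  exists s : Hom A Y, g \o s = idm A.

(** Ext(a,b) sends the class of
    xi = (B0 --f--> Y --g--> A1) to the class of the conflation eta obtained by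
    pushout along b (a conflation zeta : B1 -> Y' -> A1 with a morphism of
    conflations xi -> zeta with components (b, _, 1_A1)) followed by pullback
    along a (a conflation eta : B1 -> Y'' -> A0 with a morphism of conflations
    eta -> zeta with components (1_B1, _, a)).  Ext(a,b) = 0 means every such
    eta is split. *)
Definition Ext_zero A0 A1 B0 B1 (a : Hom A0 A1) (b : Hom B0 B1) :=
  forall Y (f : Hom B0 Y) (g : Hom Y A1), E f g ->
  forall Y' (f' : Hom B1 Y') (g' : Hom Y' A1) (y : Hom Y Y'),
    E f' g' -> y \o f = f' \o b -> g' \o y = g ->
  forall Y'' (f'' : Hom B1 Y'') (g'' : Hom Y'' A0) (y' : Hom Y'' Y'),
    E f'' g'' -> y' \o f'' = f' -> g' \o y' = a \o g'' ->
    split_conf f'' g''.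

End Exact.

Definition IdealT := forall A B : Ob, Hom A B -> Prop.

Definition is_ideal (J : IdealT) :=
  [/\ (forall A B, J A B 0),
      (forall A B (f g : Hom A B), J A B f -> J A B g -> J A B (f - g)),
      (forall A B W (f : Hom A B) (h : Hom B W), J A B f -> J A W (h \o f))
    & (forall A B W (f : Hom A B) (h : Hom W A), J A B f -> J W B (f \o h))].

Definition ideal_cap (I : Type) (Js : I -> IdealT) : IdealT :=
  fun A B f => forall i, Js i A B f.

Definition perp_ideal (E : ConfClass) (J : IdealT) : IdealT :=
  fun A0 A1 a => forall B0 B1 (j : Hom B0 B1), J B0 B1 j -> Ext_zero E a j.

Definition special_preenvelope (E : ConfClass) (J : IdealT) B C0 (j : Hom B C0) :=
  J B C0 j /\
  exists A0 (p0 : Hom C0 A0) C1 A1 (i1 : Hom B C1) (p1 : Hom C1 A1)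
         (c : Hom C0 C1) (a : Hom A0 A1),
    [/\ E _ _ _ j p0, E _ _ _ i1 p1, c \o j = i1 \o idm B, a \o p0 = p1 \o c
      & perp_ideal E J a].

Definition special_preenveloping (E : ConfClass) (J : IdealT) :=
  forall B, exists C0 (j : Hom B C0), special_preenvelope E J j.

End Defs.

(* Main.v *)
Require Import Defs.
From mathcomp Require Import all_boot all_algebra.
From Stdlib Require Import IndefiniteDescription.
Set Implicit Arguments. Unset Strict Implicit. Unset Printing Implicit Defensive.
Import GRing.Theory.
Local Open Scope ring_scope.

Section Lems.
Variables (C : Cat) (E : ConfClass C).
Local Notation "g ⊚ f" := (Defs.comp g f) (at level 40, left associativity).
Local Notation Hom := (@Defs.Hom C).
Local Notation Ob := (@Defs.Ob C).

Lemma comp0m (A B D : Ob) (f : Hom A B) : (0 : Hom B D) ⊚ f = 0.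
Proof.
have h := Defs.compDl (0 : Hom B D) 0 f; rewrite addr0 in h.
by apply: (@addrI _ (Defs.comp 0 f)); rewrite addr0 -h.
Qed.

Lemma compm0 (A B D : Ob) (f : Hom B D) : f ⊚ (0 : Hom A B) = 0.
Proof.
have h := Defs.compDr f (0 : Hom A B) 0; rewrite addr0 in h.
by apply: (@addrI _ (Defs.comp f 0)); rewrite addr0 -h.
Qed.

Hypothesis HE : is_exact_structure E.

Lemma conf_kc X Y Z (i : Hom X Y) (d : Hom Y Z) : E i d -> kc_pair i d.
Proof. by case: HE => H _ _ _ _; apply: H. Qed.

Lemma conf0 X Y Z (i : Hom X Y) (d : Hom Y Z) : E i d -> d ⊚ i = 0.
Proof. by case/conf_kc => [[]]. Qed.

Lemma ker_fact X Y Z (i : Hom X Y) (d : Hom Y Z) : E i d ->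
  forall T (f : Hom T Y), d ⊚ f = 0 -> exists h, i ⊚ h = f.
Proof. by move=> /conf_kc [[_ K] _] T f /K [h [e _]]; exists h. Qed.

Lemma coker_fact X Y Z (i : Hom X Y) (d : Hom Y Z) : E i d ->
  forall T (f : Hom Y T), f ⊚ i = 0 -> exists h, h ⊚ d = f.
Proof. by move=> /conf_kc [_ [_ K]] T f /K [h [e _]]; exists h. Qed.

Lemma mono X Y Z (i : Hom X Y) (d : Hom Y Z) : E i d ->
  forall T (h1 h2 : Hom T X), i ⊚ h1 = i ⊚ h2 -> h1 = h2.
Proof.
move=> /conf_kc [[e0 K] _] T h1 h2 e.
case: (K T (i ⊚ h1)) => [|h [_ U]]; first by rewrite Defs.compA e0 comp0m.
by rewrite (U h1 erefl) (U h2 (esym e)).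
Qed.

Lemma epi X Y Z (i : Hom X Y) (d : Hom Y Z) : E i d ->
  forall T (h1 h2 : Hom Z T), h1 ⊚ d = h2 ⊚ d -> h1 = h2.
Proof.
move=> /conf_kc [_ [e0 K]] T h1 h2 e.
case: (K T (h1 ⊚ d)) => [|h [_ U]]; first by rewrite -Defs.compA e0 compm0.
by rewrite (U h1 erefl) (U h2 (esym e)).
Qed.

Lemma po_uniq X Y X' P (i : Hom X Y) (f : Hom X X') (i' : Hom X' P) (f' : Hom Y P) :
  is_pushout i f i' f' -> forall T (h1 h2 : Hom P T),
  h1 ⊚ f' = h2 ⊚ f' -> h1 ⊚ i' = h2 ⊚ i' -> h1 = h2.
Proof.
move=> [sq U] T h1 h2 e1 e2.
case: (U T (h1 ⊚ f') (h1 ⊚ i')) => [|h [_ V]]; first by rewrite -!Defs.compA sq.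
by rewrite (V h1 erefl erefl) (V h2 (esym e1) (esym e2)).
Qed.

Lemma pb_uniq Y Z Z' P (d : Hom Y Z) (g : Hom Z' Z) (d' : Hom P Z') (g' : Hom P Y) :
  is_pullback d g d' g' -> forall T (h1 h2 : Hom T P),
  g' ⊚ h1 = g' ⊚ h2 -> d' ⊚ h1 = d' ⊚ h2 -> h1 = h2.
Proof.
move=> [sq U] T h1 h2 e1 e2.
case: (U T (g' ⊚ h1) (d' ⊚ h1)) => [|h [_ V]]; first by rewrite !Defs.compA sq.
by rewrite (V h1 erefl erefl) (V h2 (esym e1) (esym e2)).
Qed.

Lemma cop_uniq K (F : K -> Ob) P (iota : forall k, Hom (F k) P) :
  is_coproduct iota -> forall T (h1 h2 : Hom P T),
  (forall k, h1 ⊚ iota k = h2 ⊚ iota k) -> h1 = h2.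
Proof.
move=> U T h1 h2 e.
have [h [_ V]] := U T (fun k => h1 ⊚ iota k).
by rewrite (V h1 (fun _ => erefl)) (V h2 (fun k => esym (e k))).
Qed.

Lemma iso_id (A : Ob) : is_iso (idm A).
Proof. by exists (idm A); rewrite Defs.comp1m. Qed.

Lemma pullback_conf X Y Z Z' (i : Hom X Y) (d : Hom Y Z) (g : Hom Z' Z) : E i d ->
  exists P (fP : Hom X P) (dP : Hom P Z') (pi : Hom P Y),
   [/\ E fP dP, pi ⊚ fP = i & is_pullback d g dP pi].
Proof.
move=> Eid.
case: HE => _ Hiso _ _ [_ HE2op].
have [P [d' [g' [pb [X0 [i0 E0]]]]]] := HE2op _ _ _ d g (ex_intro _ X (ex_intro _ i Eid)).
have pb' := pb; case: pb' => sq U.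
case: (U X i 0) => [|fP [[e1 e2] _]]; first by rewrite (conf0 Eid) compm0.
have H : d ⊚ (g' ⊚ i0) = 0.
  by rewrite Defs.compA sq -Defs.compA (conf0 E0) compm0.
have [psi epsi] := ker_fact Eid H.
have fpsi : fP ⊚ psi = i0.
  apply: (pb_uniq pb); first by rewrite Defs.compA e1 epsi.
  by rewrite Defs.compA e2 comp0m (conf0 E0).
have [phi ephi] := ker_fact E0 e2.
exists P, fP, d', g'; split => //.
apply: (Hiso _ _ _ _ _ _ i0 d' fP d' psi (idm _) (idm _) E0).
- exists phi; split.
    by apply: (mono E0); rewrite Defs.compA ephi fpsi Defs.compm1.
  by apply: (mono Eid); rewrite Defs.compA epsi -Defs.compA ephi e1 Defs.compm1.
- exact: iso_id.
- exact: iso_id.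
- by rewrite Defs.comp1m fpsi.
- by rewrite Defs.comp1m Defs.compm1.
Qed.

Lemma pushout_conf X Y Z X' (i : Hom X Y) (d : Hom Y Z) (f : Hom X X') : E i d ->
 exists P (i' : Hom X' P) (f' : Hom Y P) (dP : Hom P Z),
   [/\ E i' dP, dP ⊚ f' = d & is_pushout i f i' f'].
Proof.
move=> Eid. case: HE => _ Hiso _ _ [HE2 _].
have [P [i' [f' [po [Z0 [e0 E0]]]]]] := HE2 _ _ _ i f (ex_intro _ Z (ex_intro _ d Eid)).
have po' := po; case: po' => sq U.
case: (U Z d 0) => [|dP [[e1 e2] _]]; first by rewrite (conf0 Eid) comp0m.
have [h eh] := coker_fact E0 e2.
have H1 : (e0 ⊚ f') ⊚ i = 0.
  by rewrite -Defs.compA sq Defs.compA (conf0 E0) comp0m.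
have [phi ephi] := coker_fact Eid H1.
have pdp : phi ⊚ dP = e0.
  apply: (po_uniq po); first by rewrite -Defs.compA e1 ephi.
  by rewrite -Defs.compA e2 compm0 (conf0 E0).
exists P, i', f', dP; split => //.
apply: (Hiso _ _ _ _ _ _ i' e0 i' dP (idm _) (idm _) h E0).
- exact: iso_id.
- exact: iso_id.
- exists phi; split.
    by apply: (epi E0); rewrite -Defs.compA eh pdp Defs.comp1m.
  by apply: (epi Eid); rewrite -Defs.compA ephi Defs.compA eh e1 Defs.comp1m.
- by rewrite Defs.comp1m Defs.compm1.
- by rewrite Defs.compm1.
Qed.

Lemma perp_coprod K (A0 A1 : K -> Ob) PA0 PA1 (io0 : forall k, Hom (A0 k) PA0)
  (io1 : forall k, Hom (A1 k) PA1) (a : forall k, Hom (A0 k) (A1 k))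
  (aS : Hom PA0 PA1) (Js : K -> IdealT C) :
  is_coproduct io0 -> (forall k, aS ⊚ io0 k = io1 k ⊚ a k) ->
  (forall k, perp_ideal E (Js k) (a k)) -> perp_ideal E (ideal_cap Js) aS.
Proof.
move=> cop0 ea Hp B0 B1 j Jj Y f g Efg Y' f' g' y Ef' eyf eg Y'' f'' g'' y' Ef'' ey' eg'.
have Hs : forall k, exists s : Hom (A0 k) Y'', g'' ⊚ s = io0 k.
  move=> k.
  have [Yk [fk [gk [pk [Ek epk pbk]]]]] := pullback_conf (io1 k) Efg.
  have [Y'k [f'k [g'k [p'k [E'k ep'k pb'k]]]]] := pullback_conf (io1 k) Ef'.
  have [Y''k [f''k [g''k [p''k [E''k ep''k pb''k]]]]] := pullback_conf (io0 k) Ef''.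
  case: (pb'k) => sq' U'.
  case: (pb''k) => sq'' _.  case: (pbk) => sq _.
  case: (U' _ (y ⊚ pk) gk) => [|yk [[e1 e2] _]].
    by rewrite Defs.compA eg sq.
  have eyk : yk ⊚ fk = f'k ⊚ j.
    apply: (pb_uniq pb'k).
      by rewrite !Defs.compA e1 ep'k -Defs.compA epk eyf.
    by rewrite !Defs.compA e2 (conf0 Ek) (conf0 E'k) comp0m.
  case: (U' _ (y' ⊚ p''k) (a k ⊚ g''k)) => [|y'k [[e3 e4] _]].
    by rewrite Defs.compA eg' -Defs.compA sq'' Defs.compA ea -Defs.compA.
  have ey'k : y'k ⊚ f''k = f'k.
    apply: (pb_uniq pb'k).
      by rewrite Defs.compA e3 -Defs.compA ep''k ey' ep'k.
    by rewrite Defs.compA e4 -Defs.compA (conf0 E''k) compm0 (conf0 E'k).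
  have [s es] := Hp k B0 B1 j (Jj k) Yk fk gk Ek Y'k f'k g'k yk E'k eyk e2 Y''k f''k g''k y'k E''k ey'k e4.
  exists (p''k ⊚ s).
  by rewrite Defs.compA sq'' -Defs.compA es Defs.compm1.
have [sig esig] : exists sig : forall k, Hom (A0 k) Y'', forall k, g'' ⊚ sig k = io0 k.
  exists (fun k => proj1_sig (constructive_indefinite_description _ (Hs k))).
  move=> k; exact: (proj2_sig (constructive_indefinite_description _ (Hs k))).
have [s [es _]] := cop0 _ sig.
exists s; apply: (cop_uniq cop0) => k.
by rewrite -Defs.compA es esig Defs.comp1m.
Qed.

Record SPE (B : Ob) := MkSPE { sC0 : Ob; sA0 : Ob; sC1 : Ob; sA1 : Ob;
  sj : Hom B sC0; sp0 : Hom sC0 sA0; si1 : Hom B sC1; sp1 : Hom sC1 sA1;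
  sc : Hom sC0 sC1; sa : Hom sA0 sA1 }.

Definition good (J : IdealT C) B (r : SPE B) :=
  J _ _ (sj r) /\ [/\ E (sj r) (sp0 r), E (si1 r) (sp1 r), sc r ⊚ sj r = si1 r,
     sa r ⊚ sp0 r = sp1 r ⊚ sc r & perp_ideal E J (sa r)].

Lemma main_spe (Hcop : has_exact_coproducts E) (I : Type) (Js : I -> IdealT C) :
  (forall i, is_ideal (Js i)) -> (forall i, special_preenveloping E (Js i)) ->
  special_preenveloping E (ideal_cap Js).
Proof.
move=> Hid Hsp B.
have Hch : forall i, exists r : SPE B, good (Js i) r.
  move=> i; have [C0 [j [Jj [A0 [p0 [C1 [A1 [i1 [p1 [c [a [E1 E2 e3 e4 Hp]]]]]]]]]]]] := Hsp i B.
  exists (MkSPE j p0 i1 p1 c a); split => //; split => //.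
  by rewrite e3 Defs.compm1.
pose R := fun i => proj1_sig (constructive_indefinite_description _ (Hch i)).
have HR : forall i, good (Js i) (R i) :=
  fun i => proj2_sig (constructive_indefinite_description _ (Hch i)).
case: Hcop => Hco Hex.
have [PB [iB copB]] := Hco I (fun _ => B).
have [PC0 [iC0 copC0]] := Hco I (fun k => sC0 (R k)).
have [PA0 [iA0 copA0]] := Hco I (fun k => sA0 (R k)).
have [PC1 [iC1 copC1]] := Hco I (fun k => sC1 (R k)).
have [PA1 [iA1 copA1]] := Hco I (fun k => sA1 (R k)).
have [nab [enab _]] := copB B (fun _ => idm B).
have [I0 [eI0 _]] := copB PC0 (fun k => iC0 k ⊚ sj (R k)).
have [D0 [eD0 _]] := copC0 PA0 (fun k => iA0 k ⊚ sp0 (R k)).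
have [I1 [eI1 _]] := copB PC1 (fun k => iC1 k ⊚ si1 (R k)).
have [D1 [eD1 _]] := copC1 PA1 (fun k => iA1 k ⊚ sp1 (R k)).
have [cS [ecS _]] := copC0 PC1 (fun k => iC1 k ⊚ sc (R k)).
have [aS [eaS _]] := copA0 PA1 (fun k => iA1 k ⊚ sa (R k)).
have E0 : E I0 D0.
  apply: (Hex I (fun _ => B) (fun k => sC0 (R k)) (fun k => sA0 (R k))
    (fun k => sj (R k)) (fun k => sp0 (R k)) _ PB PC0 PA0 iB iC0 iA0
    copB copC0 copA0 I0 D0 eI0 eD0).
  by move=> k; case: (HR k) => _ [].
have E1 : E I1 D1.
  apply: (Hex I (fun _ => B) (fun k => sC1 (R k)) (fun k => sA1 (R k))
    (fun k => si1 (R k)) (fun k => sp1 (R k)) _ PB PC1 PA1 iB iC1 iA1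
    copB copC1 copA1 I1 D1 eI1 eD1).
  by move=> k; case: (HR k) => _ [].
have [P0 [j [f0 [q0 [Ej eq0 po0]]]]] := pushout_conf nab E0.
have [P1 [i1 [f1 [q1 [Ei1 eq1 po1]]]]] := pushout_conf nab E1.
have ecI : cS ⊚ I0 = I1.
  apply: (cop_uniq copB) => k.
  case: (HR k) => _ [_ _ e3 _ _].
  by rewrite -Defs.compA eI0 Defs.compA ecS -Defs.compA e3 eI1.
case: (po0) => sq0 U0. case: (po1) => sq1 _.
case: (U0 _ (f1 ⊚ cS) i1) => [|c [[ec1 ec2] _]].
  by rewrite -Defs.compA ecI sq1.
exists P0, j; split.
  move=> k.
  have -> : j = (f0 ⊚ iC0 k) ⊚ sj (R k).
    by rewrite -Defs.compA -eI0 Defs.compA sq0 -Defs.compA enab Defs.compm1.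
  case: (Hid k) => _ _ Hl _; apply: Hl.
  by case: (HR k).
exists PA0, q0, P1, PA1, i1, q1, c, aS; split => //.
- by rewrite Defs.compm1.
- apply: (po_uniq po0).
    rewrite -!Defs.compA eq0 ec1 Defs.compA eq1.
    apply: (cop_uniq copC0) => k.
    case: (HR k) => _ [_ _ _ e4 _].
    by rewrite -!Defs.compA eD0 ecS !Defs.compA eaS eD1 -!Defs.compA e4.
  by rewrite -!Defs.compA ec2 (conf0 Ej) (conf0 Ei1) !compm0.
- apply: (perp_coprod (a := fun k => sa (R k)) (io1 := iA1) copA0).
    by move=> k; exact: eaS.
  by move=> k; case: (HR k) => _ [].
Qed.

End Lems.

Theorem theorem5p5 (C : Cat) (E : ConfClass C) :
  is_additive C -> is_exact_structure E -> has_exact_coproducts E ->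
  forall (I : Type) (Js : I -> IdealT C),
    (forall i, is_ideal (Js i)) ->
    (forall i, special_preenveloping E (Js i)) ->
    is_ideal (ideal_cap Js) /\ special_preenveloping E (ideal_cap Js).
Proof.
move=> _ HE Hcop I Js Hid Hsp; split; last exact: (main_spe HE Hcop Hid Hsp).
split.
- by move=> A B i; case: (Hid i).
- by move=> A B f g Hf Hg i; case: (Hid i) => _ H _ _; apply: H.
- by move=> A B W f h Hf i; case: (Hid i) => _ _ H _; apply: H.
- by move=> A B W f h Hf i; case: (Hid i) => _ _ _ H; apply: H.
Qed.
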